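(* For all $a,a'\in\mathbb F_{3^m}$, the vectors $(\mathrm{Tr}_{2m}(at^{3^m+1}))_{t\in\mathbb F_{3^{2m}}}$ and $(\mathrm{Tr}_{2m}(at^{3^m+1})\,\mathrm{Tr}_{2m}(a't^{3^m+1}))_{t\in\mathbb F_{3^{2m}}}$ belong to $\mathcal C_3(\mathbb D_d)$.
   Context: Let $m\ge 2$ be an integer. For $s\in\{m,2m\}$ let $\mathrm{Tr}_s:\mathbb F_{3^s}\to\mathbb F_3$ denote the absolute trace. Vectors in $\mathbb F_3^{3^{2m}}$ are indexed by $\mathbb F_{3^{2m}}$, and a function $f:\mathbb F_{3^{2m}}\to\mathbb F_3$ is identified with $(f(t))_{t\in\mathbb F_{3^{2m}}}$. Let $\mathcal C(2m,3)=\{(\mathrm{Tr}_{2m}(at^{3^m+1}+bt)+h)_{t\in\mathbb F_{3^{2m}}}: a\in\mathbb F_{3^m}, b\in\mathbb F_{3^{2m}}, h\in\mathbb F_3\}$, let $d$ be its minimum nonzero Hamming weight, let $\mathbb D_d$ be the incidence structure on $\mathbb F_{3^{2m}}$ whose blocks are the supports of the weight-$d$ codewords, and let $\mathcal C_3(\mathbb D_d)$ be the $\mathbb F_3$-span of the incidence vectors of the blocks (entry $1$ on the block, $0$ elsewhere). *)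

(* Defs.v *)
From HB Require Import structures.
From mathcomp Require Import all_boot all_order all_algebra all_field.
Set Implicit Arguments. Unset Strict Implicit. Unset Printing Implicit Defensive.
Import GRing.Theory.
Local Open Scope ring_scope.

(* Setting: F is a finite field of characteristic 3 with #|F| = 3^(2m),
   i.e. a model of F_{3^{2m}}.  The prime field F_3 is identified with the
   prime subfield {x : F | x^3 = x}, and F_{3^m} with {x : F | x^(3^m) = x}.
   Vectors in F_3^{3^{2m}} indexed by F are modelled as {ffun F -> F} whose
   entries lie in the prime subfield. *)

Section Code.
Variables (m : nat) (F : finFieldType).

Definition inF3 (x : F) : bool := x ^+ 3 == x.
Definition inFm (x : F) : bool := x ^+ (3 ^ m) == x.

Definition Tr (x : F) : F := \sum_(i < 2 * m) x ^+ (3 ^ i).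

Definition codeC : {set {ffun F -> F}} :=
  [set f : {ffun F -> F} | [exists a : F, exists b : F, exists h : F,
     [&& inFm a, inF3 h &
      f == [ffun t => Tr (a * t ^+ (3 ^ m + 1) + b * t) + h]]]].

Definition supp (f : {ffun F -> F}) : {set F} := [set t | f t != 0].
Definition wt (f : {ffun F -> F}) : nat := #|supp f|.

Definition min_wt_word (f : {ffun F -> F}) : bool :=
  [&& f \in codeC, f != 0 &
      [forall g in codeC, (g != 0) ==> (wt f <= wt g)%N]].

Definition blocksD : {set {set F}} := [set supp f | f in [pred f | min_wt_word f]].

Definition incv (B : {set F}) : {ffun F -> F} := [ffun t => (t \in B)%:R].

Definition in_C3D (v : {ffun F -> F}) : Prop :=
  exists lam : {set F} -> F,
    (forall B, inF3 (lam B)) /\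
    forall t : F, v t = \sum_(B in blocksD) lam B * incv B t.

End Code.

(* Main.v *)
Require Import Defs.
From mathcomp Require Import all_boot all_order all_algebra all_field.
From mathcomp Require Import ring zify.
Set Implicit Arguments. Unset Strict Implicit. Unset Printing Implicit Defensive.
Import GRing.Theory.
Local Open Scope ring_scope.

Section Main.
Variables (m : nat) (F : finFieldType).
Hypothesis m2 : (2 <= m)%N.
Hypothesis ch3 : 3%N \in [pchar F].
Hypothesis cardF : #|F| = (3 ^ (2 * m))%N.

Lemma frobD k (x y : F) : (x + y) ^+ (3 ^ k) = x ^+ (3 ^ k) + y ^+ (3 ^ k).
Proof.
apply: exprDn_pchar; rewrite (eq_pnat _ (pcharf_eq ch3)) pnatX pnat_id //.
Qed.

Lemma frob0 k : (0 : F) ^+ (3 ^ k) = 0.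
Proof. by rewrite expr0n expn_eq0. Qed.

Lemma frobN k (x : F) : (- x) ^+ (3 ^ k) = - x ^+ (3 ^ k).
Proof.
apply/eqP; rewrite -subr_eq0 opprK -frobD addNr frob0 //.
Qed.

Lemma frobsum k (I : finType) (P : pred I) (f : I -> F) :
  (\sum_(i | P i) f i) ^+ (3 ^ k) = \sum_(i | P i) (f i) ^+ (3 ^ k).
Proof.
exact: (big_morph (fun x : F => x ^+ (3 ^ k)) (frobD k) (frob0 k)).
Qed.

Lemma xcard (x : F) : x ^+ (3 ^ (2 * m)) = x.
Proof. by rewrite -cardF expf_card. Qed.

Lemma Tr3 (x : F) : Tr m (x ^+ 3) = Tr m x.
Proof.
rewrite /Tr; have -> : (2 * m = (2 * m).-1.+1)%N by lia.
rewrite big_ord_recr big_ord_recl /=.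
under eq_bigr do rewrite -exprM -expnS.
under [in RHS]eq_bigr do rewrite /bump leq0n add1n.
rewrite -exprM -expnS prednK ?xcard ?expr1 //; last by lia.
by rewrite addrC.
Qed.

Lemma TrX k (x : F) : Tr m (x ^+ (3 ^ k)) = Tr m x.
Proof.
elim: k => [|k IH]; first by rewrite expr1.
by rewrite expnSr exprM Tr3 IH.
Qed.

Lemma TrD (x y : F) : Tr m (x + y) = Tr m x + Tr m y.
Proof. by rewrite /Tr -big_split /=; apply: eq_bigr => i _; rewrite frobD. Qed.

Lemma Tr0 : Tr m (0 : F) = 0.
Proof. by rewrite /Tr big1 // => i _; rewrite frob0. Qed.

Lemma TrN (x : F) : Tr m (- x) = - Tr m x.
Proof. by rewrite /Tr -sumrN; apply: eq_bigr => i _; rewrite frobN. Qed.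

Lemma Tr_F3 (x : F) : inF3 (Tr m x).
Proof.
apply/eqP; have := frobsum 1 (fun i : 'I_(2 * m) => true) (fun i => x ^+ (3 ^ i)).
rewrite expn1 => ->; rewrite -[RHS]Tr3 /Tr; apply: eq_bigr => i _.
by rewrite -!exprM mulnC.
Qed.

Lemma F3X k (c : F) : inF3 c -> c ^+ (3 ^ k) = c.
Proof.
move/eqP=> c3; elim: k => [|k IH]; first by rewrite expr1.
by rewrite expnSr exprM IH c3.
Qed.

Lemma TrZ (c x : F) : inF3 c -> Tr m (c * x) = c * Tr m x.
Proof.
move=> c3; rewrite /Tr mulr_sumr; apply: eq_bigr => i _.
rewrite exprMn (F3X _ c3) //.
Qed.

Lemma three0 : (3%:R : F) = 0.
Proof. exact: pcharf0 ch3. Qed.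

Lemma natF3 n : (n%:R : F) = (n %% 3)%:R.
Proof.
by rewrite {1}(divn_eq n 3) natrD natrM three0 mulr0 add0r.
Qed.

Lemma F3_cases (x : F) : inF3 x -> [\/ x = 0, x = 1 | x = -1].
Proof.
move/eqP=> h.
have e : x * (x - 1) * (x + 1) = x ^+ 3 - x by ring.
have : x * (x - 1) * (x + 1) = 0 by rewrite e h subrr.
move/eqP; rewrite !mulf_eq0 subr_eq0 addr_eq0 -orbA.
by case/or3P=> /eqP ->; [apply: Or31|apply: Or32|apply: Or33].
Qed.

Lemma one_neq0 : (1 : F) != 0. Proof. exact: oner_neq0. Qed.
Lemma two_neq0 : (2%:R : F) != 0.
Proof. by rewrite -(dvdn_pcharf ch3). Qed.
Lemma one_neqm1 : (1 : F) != -1.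
Proof. by rewrite -subr_eq0 opprK -[1 + 1]/(2%:R) two_neq0. Qed.

Lemma inF3D (x y : F) : inF3 x -> inF3 y -> inF3 (x + y).
Proof.
rewrite /inF3 => /eqP hx /eqP hy; have := frobD 1 x y; rewrite expn1 => ->.
by rewrite hx hy.
Qed.
Lemma inF3M (x y : F) : inF3 x -> inF3 y -> inF3 (x * y).
Proof. by rewrite /inF3 exprMn => /eqP -> /eqP ->. Qed.
Lemma inF3N (x : F) : inF3 x -> inF3 (- x).
Proof. rewrite /inF3 => /eqP hx; have := frobN 1 x; rewrite expn1 => ->. by rewrite hx. Qed.
Lemma inF3nat n : inF3 (n%:R : F).
Proof.
elim: n => [|n IH]; first by rewrite /inF3 expr0n.
by rewrite -addn1 natrD inF3D // /inF3 expr1n.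
Qed.


Lemma roots_card (p : {poly F}) (A : {set F}) :
  p != 0 -> (forall x, x \in A -> root p x) -> (#|A| < size p)%N.
Proof.
move=> p0 hA; rewrite cardE; apply: max_poly_roots => //; last exact: enum_uniq.
by apply/allP => x; rewrite mem_enum; apply: hA.
Qed.

Lemma size_sumX k : size (\sum_(i < k.+1) 'X^(3 ^ i) : {poly F}) = (3 ^ k).+1.
Proof.
elim: k => [|k IH]; first by rewrite big_ord1 size_polyXn.
rewrite big_ord_recr /= addrC size_polyDl size_polyXn // IH ltnS ltn_exp2l //.
Qed.

Lemma nonroot (A : {set F}) k : (3 ^ k < #|A|)%N ->
  exists2 y, y \in A & \sum_(i < k.+1) y ^+ (3 ^ i) != 0.
Proof.
move=> hk; apply/exists_inP; rewrite -negb_forall_in; apply/negP => /forall_inP h.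
pose P : {poly F} := \sum_(i < k.+1) 'X^(3 ^ i).
have p0 : P != 0 by rewrite -size_poly_eq0 size_sumX.
suff : (#|A| < size P)%N by rewrite size_sumX ltnS leqNgt hk.
apply: roots_card p0 _ => x /h; rewrite /root /P horner_sum.
move=> e; apply/eqP; rewrite -[RHS](eqP e); apply: eq_bigr => i _; exact: hornerXn.
Qed.


Lemma card_shift (A B : {set F}) (s : F -> F) :
  injective s -> (forall x, (s x \in B) = (x \in A)) -> #|A| = #|B|.
Proof.
move=> si hs; rewrite -(card_preimset B si); apply: eq_card => x.
by rewrite !inE hs.
Qed.

Lemma sum_ind_card (S : {set F}) (f : F -> F) c :
  \sum_(x in S) (f x == c : nat) = #|[set x in S | f x == c]|.
Proof. by rewrite -sum1dep_card big_mkcondr. Qed.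

Lemma card_fib3 (S : {set F}) (f : F -> F) :
  (forall x y, x \in S -> y \in S -> x + y \in S) -> (forall x, x \in S -> - x \in S) ->
  (forall x y, x \in S -> y \in S -> f (x + y) = f x + f y) ->
  (forall x, x \in S -> inF3 (f x)) ->
  (exists2 x, x \in S & f x != 0) ->
  forall c, inF3 c -> #|S| = (3 * #|[set x in S | f x == c]|)%N.
Proof.
move=> SD SN fD f3 [x0 x0S fx0] c c3.
have S0 : 0 \in S by rewrite -(addrN x0) SD ?SN.
have f0 : f 0 = 0.
  have : f 0 + f 0 = f 0 + 0 by rewrite addr0 -fD // addr0.
  by move/addrI.
have fN x : x \in S -> f (- x) = - f x.
  move=> xS; apply/eqP; rewrite -addr_eq0 -fD ?SN // addNr f0 //.
have fib y : y \in S -> #|[set x in S | f x == f y]| = #|[set x in S | f x == 0]|.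
  move=> yS; apply/esym/(card_shift (s := fun x => x + y)); first exact: addIr.
  move=> x; rewrite !inE; case xS: (x \in S).
    by rewrite SD //= fD // -subr_eq0 addrK.
  case xyS: (x + y \in S) => //.
  by move: xS; rewrite -(addrK y x) SD ?SN.
have [x1 x1S fx1] : exists2 x1, x1 \in S & f x1 = 1.
  case: (F3_cases (f3 _ x0S)) => h.
  - by rewrite h eqxx in fx0.
  - by exists x0.
  - by exists (- x0); rewrite ?SN // fN // h opprK.
have c0 : #|[set x in S | f x == 1]| = #|[set x in S | f x == 0]|.
  by rewrite -fx1 fib.
have c1 : #|[set x in S | f x == -1]| = #|[set x in S | f x == 0]|.
  by rewrite -fx1 -fN // fib ?SN.
have tot : #|S| = addn (addn #|[set x in S | f x == 0]| #|[set x in S | f x == 1]|)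
                  #|[set x in S | f x == -1]|.
  rewrite -!sum_ind_card -!big_split /= -sum1_card; apply: eq_bigr => x xS.
  have n01 := one_neq0; have n1m := one_neqm1.
  have nm0 : (-1 : F) != 0 by rewrite oppr_eq0.
  case: (F3_cases (f3 _ xS)) => ->; rewrite !eqxx.
  - by rewrite eq_sym (negbTE n01) eq_sym (negbTE nm0).
  - by rewrite (negbTE n01) (negbTE n1m).
  - by rewrite (negbTE nm0) eq_sym (negbTE n1m).
case: (F3_cases c3) => ->; rewrite tot ?c0 ?c1; lia.
Qed.


Definition Fq : {set F} := [set x | inFm m x].
Definition Nm (t : F) := t ^+ (3 ^ m + 1).
Definition Kn : {set F} := [set t | Nm t == 1].
Definition fibN (x : F) : {set F} := [set t | Nm t == x].

Lemma qq : (3 ^ m * 3 ^ m = 3 ^ (2 * m))%N.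
Proof. by rewrite -expnD mul2n addnn. Qed.

Lemma cardFqq : #|F| = (3 ^ m * 3 ^ m)%N.
Proof. by rewrite qq. Qed.

Lemma q_gt1 : (1 < 3 ^ m)%N.
Proof. by rewrite -{1}(expn0 3) ltn_exp2l //; lia. Qed.

Lemma inFqE x : (x \in Fq) = (x ^+ (3 ^ m) == x).
Proof. by rewrite inE. Qed.

Lemma Fq0 : (0 : F) \in Fq. Proof. by rewrite inFqE frob0. Qed.
Lemma Fq1 : (1 : F) \in Fq. Proof. by rewrite inFqE expr1n. Qed.
Lemma FqD x y : x \in Fq -> y \in Fq -> x + y \in Fq.
Proof. by rewrite !inFqE frobD => /eqP -> /eqP ->. Qed.
Lemma FqN x : x \in Fq -> - x \in Fq.
Proof. by rewrite !inFqE frobN => /eqP ->. Qed.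
Lemma FqM x y : x \in Fq -> y \in Fq -> x * y \in Fq.
Proof. by rewrite !inFqE exprMn => /eqP -> /eqP ->. Qed.
Lemma FqV x : x \in Fq -> x^-1 \in Fq.
Proof. by rewrite !inFqE exprVn => /eqP ->. Qed.

Lemma Nm_Fq t : Nm t \in Fq.
Proof.
rewrite inFqE /Nm -exprM mulnDl mul1n exprD qq xcard addnC exprD expr1 //.
Qed.

Lemma Nm_eq0 t : (Nm t == 0) = (t == 0).
Proof. by rewrite /Nm expf_eq0 addn1. Qed.

Lemma card_Fq_le : (#|Fq| <= 3 ^ m)%N.
Proof.
pose P : {poly F} := 'X^(3 ^ m) - 'X.
have sP : size P = (3 ^ m).+1.
  by rewrite /P size_polyDl size_polyXn // size_polyN size_polyX ltnS q_gt1.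
have P0 : P != 0 by rewrite -size_poly_eq0 sP.
rewrite -ltnS -sP; apply: roots_card P0 _ => x.
by rewrite inFqE /root /P !hornerE subr_eq0.
Qed.

Lemma card_Kn_le : (#|Kn| <= 3 ^ m + 1)%N.
Proof.
pose P : {poly F} := 'X^(3 ^ m + 1) - 1.
have sP : size P = (3 ^ m + 1).+1 by rewrite /P size_Xn_sub_1 // addn1.
have P0 : P != 0 by rewrite -size_poly_eq0 sP.
rewrite -ltnS -sP; apply: roots_card P0 _ => x.
by rewrite inE /root /P !hornerE subr_eq0.
Qed.

Lemma fib_K x t0 : t0 != 0 -> Nm t0 = x -> #|fibN x| = #|Kn|.
Proof.
move=> t00 ht0; apply/esym/(card_shift (s := fun t => t * t0)).
  exact: mulIf.
have x0 : x != 0 by rewrite -ht0 Nm_eq0.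
move=> t; rewrite !inE /Nm exprMn -/(Nm t0) ht0.
by rewrite -{2}(mul1r x) (inj_eq (mulIf x0)).
Qed.

Lemma fib_zero : #|fibN 0| = 1%N.
Proof.
rewrite -(cards1 (0 : F)); apply: eq_card => t; rewrite !inE Nm_eq0 //.
Qed.

Lemma fib_out x : x \notin Fq -> #|fibN x| = 0%N.
Proof.
move=> xn; apply/eqP; rewrite cards_eq0; apply/eqP/setP => t; rewrite !inE.
by apply/negP => /eqP ex; move: xn; rewrite -ex Nm_Fq.
Qed.

Lemma fib_le x : (#|fibN x| <= #|Kn|)%N.
Proof.
have [e|] := set_0Vmem (fibN x); first by rewrite e cards0.
case=> t0; rewrite inE => /eqP ht0.
have [e0|t00] := eqVneq t0 0.
  move: ht0; rewrite e0 /Nm expr0n addn1 /= => <-; rewrite fib_zero card_gt0.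
  by apply/set0Pn; exists 1; rewrite inE /Nm expr1n.
by rewrite (fib_K t00 ht0).
Qed.

Lemma sum_fib : (\sum_x #|fibN x| = #|F|)%N.
Proof.
have e x : #|fibN x| = (\sum_t (Nm t == x : nat))%N.
  rewrite -sum1dep_card big_mkcond /=; apply: eq_bigr => t _ //.
rewrite (eq_bigr _ (fun x _ => e x)) exchange_big /= -sum1_card.
apply: eq_bigr => t _.
transitivity (\sum_(x | Nm t == x) 1)%N.
  by rewrite [RHS]big_mkcond /=; apply: eq_bigr => x _; case: (_ == _).
rewrite sum1dep_card -(cards1 (Nm t)).
by apply: eq_card => x; rewrite !inE eq_sym.
Qed.


Lemma norm_main : #|Fq| = (3 ^ m)%N /\
  forall x, x \in Fq -> x != 0 -> #|fibN x| = (3 ^ m + 1)%N.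
Proof.
have Hs := sum_fib; rewrite (bigD1 0) //= fib_zero cardFqq in Hs.
set E := Fq :\ 0.
have H2 : (\sum_(x | x != 0%R) #|fibN x| = \sum_(x in E) #|fibN x|)%N.
  rewrite (bigID (mem Fq)) /= [X in addn _ X]big1 ?addn0.
    by apply: eq_bigl => x; rewrite !inE andbC.
  by move=> x /andP[_ xn]; rewrite fib_out.
rewrite H2 in Hs.
have le1 : (\sum_(x in E) #|fibN x| <= #|E| * #|Kn|)%N.
  rewrite -sum_nat_const; apply: leq_sum => x _; exact: fib_le.
have cE : #|Fq| = (1 + #|E|)%N by rewrite (cardsD1 0) Fq0.
have hq := card_Fq_le; have hK := card_Kn_le; have q1 := q_gt1.
set S := (\sum_(x in E) #|fibN x|)%N in Hs le1.
set q := (3 ^ m)%N in Hs hq hK q1 cE *.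
set e := #|E| in le1 cE. set k := #|Kn| in hK le1 *.
have hEK : (e * k <= (q - 1) * (q + 1))%N by apply: leq_mul; lia.
have eq1 : e = (q - 1)%N.
  apply/eqP; rewrite eqn_leq; apply/andP; split; first lia.
  rewrite leqNgt; apply/negP => lt.
  have : (e * k <= (q - 2) * (q + 1))%N by apply: leq_mul; lia.
  nia.
have eq2 : k = (q + 1)%N.
  apply/eqP; rewrite eqn_leq hK /=; rewrite eq1 in le1; nia.
split; first lia.
move=> x xq x0; have xE : x \in E by rewrite in_setD1 x0 xq.
rewrite -eq2; apply/eqP; rewrite eqn_leq fib_le /= leqNgt; apply/negP => lt.
have : (S < e * k)%N.
  rewrite /S /e -sum_nat_const (bigD1 x) //= [X in (_ < X)%N](bigD1 x) //=.
  rewrite -addSn leq_add //; apply: leq_sum => y _; exact: fib_le.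
nia.
Qed.


Lemma Tr_Fq y : y \in Fq -> Tr m y = 2%:R * \sum_(i < m) y ^+ (3 ^ i).
Proof.
rewrite inFqE => /eqP yq; rewrite /Tr mul2n -addnn big_split_ord /=.
rewrite mulr_natl mulr2n; congr (_ + _); apply: eq_bigr => i _.
by rewrite /= expnD exprM yq.
Qed.

Lemma q3r : (3 ^ m = 3 * 3 ^ m.-1)%N.
Proof. by rewrite -expnS prednK //; lia. Qed.

Lemma Tr_nonzero_Fq : exists2 y, y \in Fq & Tr m y != 0.
Proof.
have [cq _] := norm_main.
have h : (3 ^ m.-1 < #|Fq|)%N by rewrite cq q3r; have := expn_gt0 3 m.-1; lia.
have := nonroot h; rewrite prednK; last lia.
case=> y yq ny; exists y => //; by rewrite Tr_Fq // mulf_neq0 // two_neq0.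
Qed.

Lemma Tr_nonzero_F : exists y : F, Tr m y != 0.
Proof.
have h : (3 ^ (2 * m).-1 < #|[set: F]|)%N.
  rewrite cardsT cardF -{2}(prednK (_ : 0 < 2 * m)%N); last lia.
  by rewrite ltn_exp2l.
have := nonroot h; rewrite prednK; last lia.
by case=> y _ ny; exists y.
Qed.

Lemma count_Fq a c : a \in Fq -> a != 0 -> inF3 c ->
  (3 * #|[set x in Fq | Tr m (a * x)%R == c]| = 3 ^ m)%N.
Proof.
move=> aq a0 c3; have [cq _] := norm_main; rewrite -cq.
apply/esym/card_fib3 => //.
- exact: FqD.
- exact: FqN.
- by move=> x y _ _; rewrite mulrDr TrD.
- by move=> x _; apply: Tr_F3.
- have [y yq ny] := Tr_nonzero_Fq; exists (a^-1 * y).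
    by rewrite FqM // FqV.
  by rewrite mulrA mulfV // mul1r.
Qed.

Lemma count_F b c : b != 0 -> inF3 c ->
  (3 * #|[set x in [set: F] | Tr m (b * x)%R == c]| = #|F|)%N.
Proof.
move=> b0 c3; rewrite -cardsT.
apply/esym/card_fib3 => //.
- by move=> *; rewrite in_setT.
- by move=> *; rewrite in_setT.
- by move=> x y _ _; rewrite mulrDr TrD.
- by move=> x _; apply: Tr_F3.
- have [y ny] := Tr_nonzero_F; exists (b^-1 * y); first by rewrite inE.
  by rewrite mulrA mulfV // mul1r.
Qed.

Lemma countN (P : pred F) :
  #|[set t | P (Nm t)]| =
    (P 0%R + (3 ^ m + 1) * (#|[set x in Fq | P x]| - P 0%R))%N.
Proof.
have [_ fq] := norm_main.
have s1 : #|[set t | P (Nm t)]| = (\sum_x P x * #|fibN x|)%N.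
  rewrite -sum1dep_card (partition_big Nm xpredT) //=.
  apply: eq_bigr => x _; rewrite sum1dep_card; case Px: (P x).
    rewrite mul1n; apply: eq_card => t; rewrite !inE.
    by case: eqP => [->|]; rewrite ?Px ?andbF ?andbT.
  rewrite mul0n; apply/eqP; rewrite cards_eq0; apply/eqP/setP => t; rewrite !inE.
  by case: eqP => [->|]; rewrite ?Px ?andbF.
set E := Fq :\ 0.
have s2 : (\sum_x P x * #|fibN x| = P 0%R + (3 ^ m + 1) * #|[set x in E | P x]|)%N.
  rewrite (bigD1 0) //= fib_zero muln1; congr (_ + _)%N.
  rewrite (bigID (mem Fq)) /= [X in addn _ X]big1 ?addn0; last first.
    by move=> x /andP[_ xn]; rewrite fib_out // muln0.
  rewrite -sum1dep_card big_distrr /= big_mkcond [RHS]big_mkcond /=.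
  apply: eq_bigr => x _; rewrite !inE.
  case: eqP => [->|/eqP x0] //=; case xq: (inFm m x) => //=.
  rewrite fq ?inFqE //; case: (P x) => /=; lia.
have s3 : #|[set x in Fq | P x]| = (P 0%R + #|[set x in E | P x]|)%N.
  have F0 : inFm m (0 : F) by have := Fq0; rewrite inE.
  rewrite (cardsD1 0) !inE F0 /=; congr (_ + _)%N.
  by apply: eq_card => x; rewrite !inE andbA.
rewrite s1 s2 s3; case: (P 0) => /=; lia.
Qed.


Lemma countM a c : a \in Fq -> a != 0 -> inF3 c ->
  #|[set t | Tr m (a * Nm t)%R == c]| =
    ((c == 0%R) + (3 ^ m + 1) * (3 ^ m.-1 - (c == 0%R)))%N.
Proof.
move=> aq a0 c3.
have := countN (fun x => Tr m (a * x) == c); rewrite /= mulr0 Tr0 eq_sym => ->.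
have := count_Fq aq a0 c3; rewrite q3r => h.
have -> : #|[set x in Fq | Tr m (a * x) == c]| = (3 ^ m.-1)%N by lia.
by [].
Qed.

Lemma countM_le a c : a \in Fq -> a != 0 -> inF3 c ->
  (#|[set t | Tr m (a * Nm t)%R == c]| <= (3 ^ m + 1) * 3 ^ m.-1)%N.
Proof.
move=> aq a0 c3; rewrite countM //; have := expn_gt0 3 m.-1.
case: (c == 0) => /=; nia.
Qed.

Lemma countM_nz a c : a \in Fq -> a != 0 -> inF3 c -> c != 0 ->
  #|[set t | Tr m (a * Nm t)%R == c]| = ((3 ^ m + 1) * 3 ^ m.-1)%N.
Proof. by move=> aq a0 c3 cn; rewrite countM // (negbTE cn) subn0. Qed.

Definition Z (f : {ffun F -> F}) := #|[set t | f t == 0]|.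

Lemma wtZ f : (wt f + Z f)%N = #|F|.
Proof.
rewrite /wt /Z -(cardsC (supp f)); congr (_ + _)%N; apply: eq_card => t.
by rewrite !inE negbK.
Qed.

Lemma Nm_add t u : Nm (t + u) = Nm t + t ^+ (3 ^ m) * u + u ^+ (3 ^ m) * t + Nm u.
Proof.
rewrite /Nm !exprD !expr1 frobD; ring.
Qed.

Lemma shift_id a b u t : a \in Fq -> a != 0 -> u = (b / (2%:R * a)) ^+ (3 ^ m) ->
  Tr m (a * Nm (t + u)) = Tr m (a * Nm t + b * t) + Tr m (a * Nm u).
Proof.
rewrite inFqE => /eqP aq a0 ue.
have uq : u ^+ (3 ^ m) = b / (2%:R * a) by rewrite ue -exprM qq xcard.
have e1 : Tr m (a * (t ^+ (3 ^ m) * u)) = Tr m (a * (u ^+ (3 ^ m) * t)).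
  rewrite -(TrX m (a * (u ^+ (3 ^ m) * t))) !exprMn aq -exprM qq xcard.
  by congr (Tr m _); ring.
rewrite Nm_add !mulrDr !TrD e1.
have e2 : Tr m (a * (u ^+ (3 ^ m) * t)) + Tr m (a * (u ^+ (3 ^ m) * t)) = Tr m (b * t).
  rewrite -TrD; congr (Tr m _); rewrite uq.
  have := two_neq0 => h2.
  by field; rewrite a0 h2.
rewrite -e2; ring.
Qed.


Lemma codeC_E f : f \in codeC m F -> exists a b h,
  [/\ inFm m a, inF3 h & f = [ffun t => Tr m (a * t ^+ (3 ^ m + 1) + b * t) + h]].
Proof.
rewrite inE => /existsP [a /existsP [b /existsP [h /and3P [ha hh /eqP hf]]]].
by exists a, b, h.
Qed.

Lemma r_pos : (0 < 3 ^ m.-1)%N. Proof. exact: expn_gt0. Qed.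

Lemma Zbound f : f \in codeC m F -> f != 0 -> (Z f <= (3 ^ m + 1) * 3 ^ m.-1)%N.
Proof.
case/codeC_E => a [b [h [ha hh ->]]] fn.
have aq : a \in Fq by rewrite inE.
have [a0|a0] := eqVneq a 0.
  subst a; have [b0|b0] := eqVneq b 0.
    subst b; have h0 : h != 0.
      apply: contraNneq fn => h0; apply/eqP/ffunP => t.
      by rewrite !ffunE !mul0r addr0 Tr0 h0 add0r.
    rewrite /Z (_ : [set t | _] = set0) ?cards0 //; apply/setP => t.
    by rewrite !inE ffunE !mul0r addr0 Tr0 add0r (negbTE h0).
  have e : Z [ffun t => Tr m (0 * t ^+ (3 ^ m + 1) + b * t) + h] =
     #|[set x in [set: F] | Tr m (b * x) == - h]|.
    by apply: eq_card => t; rewrite !inE ffunE mul0r add0r addr_eq0.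
  have := count_F b0 (inF3N hh); rewrite -e cardFqq q3r => hz.
  move: hz; have := r_pos; set Zf := Z _; set r := (3 ^ m.-1)%N => *; nia.
pose u := (b / (2%:R * a)) ^+ (3 ^ m).
have e : Z [ffun t => Tr m (a * t ^+ (3 ^ m + 1) + b * t) + h] =
     #|[set t | Tr m (a * Nm (t + u)) == Tr m (a * Nm u) - h]|.
  apply: eq_card => t; rewrite !inE ffunE -/(Nm t) (shift_id t aq a0 (erefl u)).
  by rewrite -[in RHS]subr_eq0; congr (_ == 0); ring.
rewrite e (card_shift (B := [set s | Tr m (a * Nm s) == Tr m (a * Nm u) - h])
  (s := fun t => t + u)); first exact: countM_le (inF3D (Tr_F3 _) (inF3N hh)).
  exact: addIr.
by move=> t; rewrite !inE.
Qed.

Definition g0 (a h : F) : {ffun F -> F} :=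
  [ffun t : F => Tr m (a * t ^+ (3 ^ m + 1) + 0 * t) + h].

Lemma g0_code a h : inFm m a -> inF3 h -> g0 a h \in codeC m F.
Proof.
move=> ha hh; rewrite inE; apply/existsP; exists a; apply/existsP; exists 0.
by apply/existsP; exists h; rewrite ha hh eqxx.
Qed.

Lemma Z_g0 a h : a \in Fq -> a != 0 -> inF3 h -> h != 0 ->
  Z (g0 a h) = ((3 ^ m + 1) * 3 ^ m.-1)%N.
Proof.
move=> aq a0 hh h0; rewrite -(countM_nz aq a0 (inF3N hh)) ?oppr_eq0 //.
by apply: eq_card => t; rewrite !inE ffunE mul0r addr0 addr_eq0.
Qed.

Lemma g0_min a h : a \in Fq -> a != 0 -> inF3 h -> h != 0 -> min_wt_word m (g0 a h).
Proof.
move=> aq a0 hh h0; have ha : inFm m a by move: aq; rewrite inE.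
rewrite /min_wt_word g0_code //=; apply/andP; split.
  apply/negP => /eqP g00; have := Z_g0 aq a0 hh h0; rewrite g00.
  rewrite /Z (_ : [set t | _] = setT); last by apply/setP => t; rewrite !inE ffunE eqxx.
  rewrite cardsT cardFqq q3r; have := r_pos; nia.
apply/forall_inP => g gC; apply/implyP => gn.
have := Zbound gC gn; have := wtZ g; have := wtZ (g0 a h); rewrite Z_g0 //; lia.
Qed.

Lemma block_g0 a h : a \in Fq -> a != 0 -> inF3 h -> h != 0 ->
  supp (g0 a h) \in blocksD m F.
Proof.
by move=> aq a0 hh h0; apply: imset_f; rewrite inE; apply: g0_min.
Qed.


Definition spanP (v : F -> F) := exists lam : {set F} -> F,
  (forall B, inF3 (lam B)) /\
  forall t, v t = \sum_(B in blocksD m F) lam B * incv B t.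

Lemma span_ext v w : spanP v -> (forall t, v t = w t) -> spanP w.
Proof. by move=> [lam [h1 h2]] e; exists lam; split => // t; rewrite -e. Qed.

Lemma span0 : spanP (fun _ => 0).
Proof.
exists (fun _ => 0); split => [B|t]; first by rewrite /inF3 expr0n.
by rewrite big1 // => B _; rewrite mul0r.
Qed.

Lemma spanD v w : spanP v -> spanP w -> spanP (fun t => v t + w t).
Proof.
move=> [l1 [h1 e1]] [l2 [h2 e2]]; exists (fun B => l1 B + l2 B); split.
  by move=> B; apply: inF3D.
by move=> t; rewrite e1 e2 -big_split /=; apply: eq_bigr => B _; rewrite mulrDl.
Qed.

Lemma spanZ c v : inF3 c -> spanP v -> spanP (fun t => c * v t).
Proof.
move=> c3 [l1 [h1 e1]]; exists (fun B => c * l1 B); split.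
  by move=> B; apply: inF3M.
by move=> t; rewrite e1 mulr_sumr; apply: eq_bigr => B _; rewrite mulrA.
Qed.

Lemma span_incv B0 : B0 \in blocksD m F -> spanP (fun t => incv B0 t).
Proof.
move=> hB; exists (fun B => (B == B0)%:R); split; first by move=> B; apply: inF3nat.
move=> t; rewrite (bigD1 B0) //= eqxx mul1r big1 ?addr0 // => B /andP[_ nB].
by rewrite (negbTE nB) mul0r.
Qed.

Lemma span_sum (I : finType) (P : pred I) (v : I -> F -> F) :
  (forall i, P i -> spanP (v i)) -> spanP (fun t => \sum_(i | P i) v i t).
Proof.
move=> hv; rewrite /index_enum; elim: (Finite.enum I) => [|i s IH].
  by apply: span_ext span0 _ => t; rewrite big_nil.
case Pi: (P i).
  by apply: span_ext (spanD (hv i Pi) IH) _ => t; rewrite big_cons Pi.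
by apply: span_ext IH _ => t; rewrite big_cons Pi.
Qed.


Definition G (a t : F) := Tr m (a * t ^+ (3 ^ m + 1)).

Lemma incv_g0 a h t : incv (supp (g0 a h)) t = (G a t + h != 0)%:R.
Proof. by rewrite /incv !ffunE inE ffunE mul0r addr0. Qed.

Lemma two_neq0' : (1 + 1 : F) != 0. Proof. exact: two_neq0. Qed.
Lemma mtwo_neq0 : (-1 - 1 : F) != 0.
Proof. by rewrite -opprD oppr_eq0 two_neq0'. Qed.
Lemma m1_neq0 : (-1 : F) != 0. Proof. by rewrite oppr_eq0 oner_neq0. Qed.

Lemma G_F3 a t : inF3 (G a t). Proof. exact: Tr_F3. Qed.

Lemma lin a : a \in Fq -> spanP (G a).
Proof.
move=> aq; have [->|a0] := eqVneq a 0.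
  by apply: span_ext span0 _ => t; rewrite /G mul0r Tr0.
have h1 := span_incv (block_g0 aq a0 (inF3nat 1) (oner_neq0 F)).
have h2 := span_incv (block_g0 aq a0 (inF3N (inF3nat 1)) m1_neq0).
apply: span_ext (spanD h1 (spanZ (inF3N (inF3nat 1)) h2)) _ => t.
rewrite !incv_g0 ?mulr1n; case: (F3_cases (G_F3 a t)) => ->.
- by rewrite add0r sub0r oppr_eq0 oner_neq0 mulN1r addrN.
- by rewrite subrr eqxx mulr0 addr0 two_neq0'.
- by rewrite addNr eqxx mtwo_neq0 add0r mulN1r.
Qed.

Lemma sum_neq_card (S : {set F}) (f : F -> F) c :
  (\sum_(x in S) (f x != c : nat) = #|S| - #|[set x in S | f x == c]|)%N.
Proof.
rewrite -sum_ind_card -sum1_card.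
have e : (\sum_(x in S) 1 = \sum_(x in S) ((f x != c : nat) + (f x == c : nat)))%N.
  by apply: eq_bigr => x _; case: eqP.
by rewrite e big_split /= addnK.
Qed.

Lemma one : spanP (fun _ => 1).
Proof.
set E := Fq :\ 0.
have hs : spanP (fun t => \sum_(a in E) (incv (supp (g0 a 1)) t + incv (supp (g0 a (-1))) t)).
  apply: span_sum => a; rewrite !inE => /andP[a0 ha].
  have aq : a \in Fq by rewrite inE.
  apply: spanD; apply: span_incv; apply: block_g0 => //.
  - exact: inF3nat 1.
  - exact: oner_neq0.
  - exact: inF3N (inF3nat 1).
  - exact: m1_neq0.
apply: span_ext hs _ => t.
have [cq _] := norm_main.
have cE : #|E| = (3 ^ m - 1)%N. have := cardsD1 0 Fq; rewrite Fq0 cq -/E /=. by move=> ->; rewrite add1n subn1.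
under eq_bigr do rewrite !incv_g0 -natrD.
rewrite -natr_sum natF3.
have [x0|x0] := eqVneq (Nm t) 0.
  have -> : (\sum_(i in E) ((G i t + 1 != 0)%R + (G i t + -1 != 0)%R))%N = (\sum_(i in E) 2)%N.
    apply: eq_bigr => a _; rewrite /G -/(Nm t) x0 mulr0 Tr0 add0r oner_neq0.
    by rewrite sub0r m1_neq0.
  rewrite sum_nat_const cE q3r.
  have r3 : (3 ^ m.-1 = 3 * 3 ^ m.-2)%N by rewrite -expnS -subn2 -subn1 subnSK; [lia|lia].
  rewrite r3; have := expn_gt0 3 m.-2; set s := (3 ^ m.-2)%N => ?.
  have -> : ((3 * (3 * s) - 1) * 2 %% 3 = 1)%N by lia.
  by [].
have xq := Nm_Fq t.
have cnt c : c != 0 -> inF3 c ->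
    #|[set a in E | Tr m (a * Nm t) == c]| = (3 ^ m.-1)%N.
  move=> cn c3; have := count_Fq xq x0 c3; rewrite q3r.
  have -> : #|[set a in Fq | Tr m (Nm t * a) == c]| = #|[set a in E | Tr m (a * Nm t) == c]|.
    apply: eq_card => a; rewrite !inE mulrC; have [->|an] := eqVneq a 0 => //=.
    by rewrite mul0r Tr0 eq_sym (negbTE cn) andbF.
  lia.
have -> : (\sum_(i in E) ((G i t + 1 != 0)%R + (G i t + -1 != 0)%R))%N =
   ((#|E| - #|[set a in E | Tr m (a * Nm t)%R == -1%R]|) +
    (#|E| - #|[set a in E | Tr m (a * Nm t)%R == 1%R]|))%N.
  rewrite -!sum_neq_card -big_split /=; apply: eq_bigr => a _.
  by rewrite /G -/(Nm t) addr_eq0 subr_eq0.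
rewrite !cnt ?m1_neq0 ?oner_neq0 ?inF3nat ?(inF3N (inF3nat 1)) //.
rewrite cE q3r.
have r3 : (3 ^ m.-1 = 3 * 3 ^ m.-2)%N by rewrite -expnS -subn2 -subn1 subnSK; [lia|lia].
rewrite r3; have := expn_gt0 3 m.-2; set s := (3 ^ m.-2)%N => ?.
have -> : ((3 * (3 * s) - 1 - 3 * s + (3 * (3 * s) - 1 - 3 * s)) %% 3 = 1)%N by lia.
  by []. by rewrite /inF3 expr1n.
Qed.


Lemma e3 : (1 + 1 + 1 : F) = 0.
Proof. by rewrite -three0 -[3%N]/(1 + 1 + 1)%N !natrD. Qed.

Lemma eq_mod3 (x y k : F) : x - y = k * (1 + 1 + 1) -> x = y.
Proof. by rewrite e3 mulr0 => /eqP; rewrite subr_eq0 => /eqP. Qed.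

Lemma sq a : a \in Fq -> spanP (fun t => G a t ^+ 2).
Proof.
move=> aq; have [->|a0] := eqVneq a 0.
  by apply: span_ext span0 _ => t; rewrite /G mul0r Tr0 expr0n.
have h1 := span_incv (block_g0 aq a0 (inF3nat 1) (oner_neq0 F)).
have h2 := span_incv (block_g0 aq a0 (inF3N (inF3nat 1)) m1_neq0).
apply: span_ext (spanZ (inF3N (inF3nat 1)) (spanD one (spanD h1 h2))) _ => t.
rewrite !incv_g0 ?mulr1n; case: (F3_cases (G_F3 a t)) => ->.
- rewrite add0r sub0r oppr_eq0 oner_neq0 expr0n /=.
  by apply: (eq_mod3 (k := -1)); ring.
- rewrite subrr eqxx two_neq0' expr1n /=.
  by apply: (eq_mod3 (k := -1)); ring.
- rewrite addNr eqxx mtwo_neq0 /=.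
  by apply: (eq_mod3 (k := -1)); ring.
Qed.

Lemma GD a b t : G (a + b) t = G a t + G b t.
Proof. by rewrite /G mulrDl TrD. Qed.
Lemma GB a b t : G (a - b) t = G a t - G b t.
Proof. by rewrite /G mulrBl TrD TrN. Qed.

Lemma prod a b : a \in Fq -> b \in Fq -> spanP (fun t => G a t * G b t).
Proof.
move=> aq bq.
have h1 := sq (FqD aq bq); have h2 := sq (FqD aq (FqN bq)).
apply: span_ext (spanD h1 (spanZ (inF3N (inF3nat 1)) h2)) _ => t.
rewrite GD GB; symmetry; apply: (eq_mod3 (k := - (G a t * G b t))); rewrite ?mulr1n; ring.
Qed.

Lemma final a a' : inFm m a -> inFm m a' ->
    in_C3D m [ffun t : F => Tr m (a * t ^+ (3 ^ m + 1))] /\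
    in_C3D m [ffun t : F => Tr m (a * t ^+ (3 ^ m + 1)) *
                            Tr m (a' * t ^+ (3 ^ m + 1))].
Proof.
move=> ha ha'; have aq : a \in Fq by rewrite inE.
have aq' : a' \in Fq by rewrite inE.
split.
  have [lam [l1 l2]] := lin aq; exists lam; split => // t; rewrite ffunE; exact: l2.
have [lam [l1 l2]] := prod aq aq'; exists lam; split => // t; rewrite ffunE; exact: l2.
Qed.

End Main.

Theorem lemma3p8 (m : nat) (F : finFieldType) :
  (2 <= m)%N -> (3%N \in [pchar F]) -> #|F| = (3 ^ (2 * m))%N ->
  forall a a' : F, inFm m a -> inFm m a' ->
    in_C3D m [ffun t : F => Tr m (a * t ^+ (3 ^ m + 1))] /\
    in_C3D m [ffun t : F => Tr m (a * t ^+ (3 ^ m + 1)) *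
                            Tr m (a' * t ^+ (3 ^ m + 1))].
Proof.
move=> h1 h2 h3 a a' ha ha'; exact: (final h1 h2 h3 ha ha').
Qed.
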